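(* Let $k=\mathbf{F}_q$, $F=k((\epsilon))$, $\mathcal{O}=k[[\epsilon]]$, $G=\mathrm{GL}_3$, $K=G(\mathcal{O})$, and let $U_0$ be the group of upper unitriangular $3\times 3$ matrices. Let $\mathbf{i}$ be one of the two reduced words $(1,2,1)$ or $(2,1,2)$ of the longest element $w_0$ of the Weyl group $S_3$. Then for every $u\in U_0(F)$ there exists $(t_1,t_2,t_3)\in F^3$ such that $\mathbf{y}_{\mathbf{i}}(t_1,t_2,t_3)$ is defined and $$uK=\mathbf{y}_{\mathbf{i}}(t_1,t_2,t_3)^{-1}K \quad\text{in } G(F)/K .$$
   Context: For $i=1,2$ let $\mathbf{x}_i(t)=1+tE_{i,i+1}\in U_0$ (with $E_{a,b}$ the elementary matrix), and for a reduced word $\mathbf{i}=(i_1,i_2,i_3)$ put $\mathbf{x}_{\mathbf{i}}(t_1,t_2,t_3)=\mathbf{x}_{i_3}(t_3)\mathbf{x}_{i_2}(t_2)\mathbf{x}_{i_1}(t_1)$. For a matrix $g$ admitting a Gaussian decomposition $g=vtu$ with $v$ lower unitriangular, $t$ diagonal, $u$ upper unitriangular, write $[g]_+=u$. Let $\bar s_i$ be the image of $\begin{bmatrix}0&1\\-1&0\end{bmatrix}$ under the embedding of $\mathrm{SL}_2$ in $G$ in rows/columns $i,i+1$, and $\bar w_0=\bar s_1\bar s_2\bar s_1$. The map $\eta(y)=[\bar w_0 y^{t}]_+$ ($y^t$ the transpose) is a birational automorphism of $U_0$; define the rational map $\mathbf{y}_{\mathbf{i}}=\eta^{-1}\circ\mathbf{x}_{\mathbf{i}}$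 (Berenstein–Fomin–Zelevinsky parametrization), applied over the field $F$. *)

(* Defs.v *)
From HB Require Import structures.
From mathcomp Require Import all_boot all_order all_algebra.
From mathcomp Require Import boolp.
Set Implicit Arguments. Unset Strict Implicit. Unset Printing Implicit Defensive.
Import Order.TTheory GRing.Theory.
Local Open Scope ring_scope.

Section PowerSeries.
Variable k : fieldType.

Record ps := PS { coef : nat -> k }.

HB.instance Definition _ := gen_eqMixin ps.
HB.instance Definition _ := gen_choiceMixin ps.

Lemma ps_ext (a b : ps) : (forall n, coef a n = coef b n) -> a = b.
Proof. by case: a => f; case: b => g H; congr PS; apply: funext => n; exact: H. Qed.

Definition ps0 := PS (fun _ => 0).
Definition psopp a := PS (fun n => - coef a n).
Definition psadd a b := PS (fun n => coef a n + coef b n).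

Fact psaddA : associative psadd.
Proof. by move=> a b c; apply: ps_ext => n /=; rewrite addrA. Qed.
Fact psaddC : commutative psadd.
Proof. by move=> a b; apply: ps_ext => n /=; rewrite addrC. Qed.
Fact psadd0 : left_id ps0 psadd.
Proof. by move=> a; apply: ps_ext => n /=; rewrite add0r. Qed.
Fact psaddN : left_inverse ps0 psopp psadd.
Proof. by move=> a; apply: ps_ext => n /=; rewrite addNr. Qed.

HB.instance Definition _ := GRing.isZmodule.Build ps psaddA psaddC psadd0 psaddN.

Definition trunc n (a : ps) : {poly k} := \poly_(i < n.+1) coef a i.

Definition psmul a b := PS (fun n => (trunc n a * trunc n b)`_n).
Definition ps1 := PS (fun n => (n == 0%N)%:R).

Lemma coef_psmul a b n :
  coef (psmul a b) n = \sum_(j < n.+1) coef a j * coef b (n - j).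
Proof.
rewrite /= coefM; apply: eq_bigr => j _.
by rewrite !coef_poly ltn_ord ltnS leq_subr.
Qed.

Lemma psmul_poly (p q : {poly k}) a b n :
  (forall i, (i <= n)%N -> p`_i = coef a i) ->
  (forall i, (i <= n)%N -> q`_i = coef b i) ->
  (p * q)`_n = coef (psmul a b) n.
Proof.
move=> Hp Hq; rewrite coef_psmul coefM; apply: eq_bigr => j _.
by rewrite Hp ?Hq ?leq_subr // -ltnS.
Qed.

Lemma coef_trunc n a i : (i <= n)%N -> (trunc n a)`_i = coef a i.
Proof. by move=> H; rewrite coef_poly ltnS H. Qed.

Fact psmulA : associative psmul.
Proof.
move=> a b c; apply: ps_ext => n.
transitivity ((trunc n a * (trunc n b * trunc n c))`_n).
  symmetry; apply: psmul_poly => i Hi; first exact: coef_trunc.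
  by apply: psmul_poly => l Hl; apply: coef_trunc; apply: leq_trans Hi.
rewrite mulrA; apply: psmul_poly => i Hi; last exact: coef_trunc.
by apply: psmul_poly => l Hl; apply: coef_trunc; apply: leq_trans Hi.
Qed.

Fact psmulC : commutative psmul.
Proof. by move=> a b; apply: ps_ext => n /=; rewrite mulrC. Qed.

Fact psmul1 : left_id ps1 psmul.
Proof.
move=> a; apply: ps_ext => n; rewrite -(psmul_poly (p := 1) (q := trunc n a)).
- by rewrite mul1r coef_trunc.
- by move=> i _; rewrite coef1.
- by move=> i Hi; rewrite coef_trunc.
Qed.

Fact psmulDl : left_distributive psmul psadd.
Proof.
move=> a b c; apply: ps_ext => n.
rewrite -(psmul_poly (p := trunc n a + trunc n b) (q := trunc n c)).
- by rewrite mulrDl coefD.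
- by move=> i Hi; rewrite coefD !coef_trunc.
- by move=> i Hi; rewrite coef_trunc.
Qed.

Fact ps1_neq0 : ps1 != ps0.
Proof.
apply/eqP => H; have := congr1 (fun x => coef x 0) H => /=.
by move/eqP; rewrite oner_eq0.
Qed.

HB.instance Definition _ :=
  GRing.Zmodule_isComNzRing.Build ps psmulA psmulC psmul1 psmulDl ps1_neq0.

Definition psunit : {pred ps} := fun x => `[< exists y : ps, y * x = 1 >].
Definition psinv (x : ps) : ps :=
  match pselect (exists y : ps, y * x = 1) with
  | left P => proj1_sig (cid P)
  | right _ => x
  end.

Fact psmulVx : {in psunit, left_inverse 1 psinv *%R}.
Proof.
move=> x /asboolP Hx; rewrite /psinv; case: pselect => [P|//].
by case: cid.
Qed.

Fact psunitPl : forall x y : ps, y * x = 1 -> psunit x.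
Proof. by move=> x y H; apply/asboolP; exists y. Qed.

Fact psinv_out : {in [predC psunit], psinv =1 id}.
Proof.
move=> x; rewrite inE /= => /asboolPn Hx; rewrite /psinv.
by case: pselect.
Qed.

HB.instance Definition _ :=
  GRing.ComNzRing_hasMulInverse.Build ps psmulVx psunitPl psinv_out.

Lemma ps_nz_coef (x : ps) : x != 0 -> exists n, coef x n != 0.
Proof.
move=> xn0; case: (pselect (exists n, coef x n != 0)) => // Hx; exfalso.
apply/(negP xn0)/eqP/ps_ext => n /=.
by case: (eqVneq (coef x n) 0) => // h; exfalso; apply: Hx; exists n.
Qed.

Fact ps_idomain : GRing.integral_domain_axiom ps.
Proof.
move=> x y Hxy; case: (eqVneq x 0) => //= /ps_nz_coef Hx.
apply/eqP; apply: contrapT => /eqP /ps_nz_coef Hy.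
case: (ex_minnP Hx) => i xi imin; case: (ex_minnP Hy) => j yj jmin.
have := congr1 (fun z => coef z (i + j)) Hxy.
change (coef (psmul x y) (i + j) = 0 -> False).
rewrite coef_psmul.
rewrite (bigD1 (Ordinal (n := (i + j).+1) (leq_addr j i))) //= big1.
  by rewrite addr0 addKn => /eqP; rewrite mulf_eq0 (negPf xi) (negPf yj).
move=> [m Hm] /= Hmi.
have [lt_mi | lt_im | eq_mi] := ltngtP m i.
- case: (eqVneq (coef x m) 0) => [->|h]; first by rewrite mul0r.
  by have := imin m h; rewrite leqNgt lt_mi.
- case: (eqVneq (coef y (i + j - m)) 0) => [->|h]; first by rewrite mulr0.
  have := jmin _ h; rewrite leqNgt => /negP []; rewrite ltn_subLR; last first.
    by rewrite -ltnS.
  by rewrite ltn_add2r.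
- by exfalso; move: Hmi; apply/negP; rewrite negbK; apply/eqP/val_inj; rewrite /= eq_mi.
Qed.

HB.instance Definition _ := GRing.ComUnitRing_isIntegral.Build ps ps_idomain.

End PowerSeries.

Notation PowerSeries k := (ps k).
Notation LaurentSeries k := {fraction (ps k)}.

Section GL3.
Variable F : fieldType.

(* x lies in the valuation ring O, seen inside F = Frac(O) via [R] *)
Definition in_image (R : idomainType) (x : {fraction R}) : Prop :=
  exists a : R, x = FracField.tofrac a.

Definition upper_unitri (g : 'M[F]_3) : Prop :=
  (forall i j : 'I_3, (j < i)%N -> g i j = 0) /\ (forall i, g i i = 1).
Definition lower_unitri (g : 'M[F]_3) : Prop :=
  (forall i j : 'I_3, (i < j)%N -> g i j = 0) /\ (forall i, g i i = 1).
Definition inv_diagonal (g : 'M[F]_3) : Prop :=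
  (forall i j : 'I_3, i != j -> g i j = 0) /\ g \in unitmx.

(* [gauss_plus g u] : g admits a Gaussian decomposition g = v t u and
   [g]_+ = u *)
Definition gauss_plus (g u : 'M[F]_3) : Prop :=
  exists v t, lower_unitri v /\ inv_diagonal t /\ upper_unitri u /\
              g = v *m t *m u.

(* x_i(t) = 1 + t E_{i,i+1}, for i = 1, 2 (1-indexed as in the paper) *)
Definition xgen (i : nat) (t : F) : 'M[F]_3 :=
  1%:M + t *: delta_mx (inord i.-1) (inord i).

Definition xword (i1 i2 i3 : nat) (t1 t2 t3 : F) : 'M[F]_3 :=
  xgen i3 t3 *m xgen i2 t2 *m xgen i1 t1.

(* \bar s_i : image of [[0,1],[-1,0]] in rows/columns i, i+1 (1-indexed) *)
Definition sbar (i : nat) : 'M[F]_3 :=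
  \matrix_(a, b)
    if (a == i.-1 :> nat) && (b == i :> nat) then 1
    else if (a == i :> nat) && (b == i.-1 :> nat) then -1
    else if (a == b) && (a != i.-1 :> nat) && (a != i :> nat) then 1
    else 0.

Definition w0bar : 'M[F]_3 := sbar 1 *m sbar 2 *m sbar 1.

(* eta(y) = [w0bar y^T]_+ is defined at y and equals x *)
Definition eta_rel (y x : 'M[F]_3) : Prop := gauss_plus (w0bar *m y^T) x.

(* y_i(t1,t2,t3) = eta^{-1}(x_i(t1,t2,t3)) is defined and equals y *)
Definition yBFZ (i1 i2 i3 : nat) (t1 t2 t3 : F) (y : 'M[F]_3) : Prop :=
  upper_unitri y /\ eta_rel y (xword i1 i2 i3 t1 t2 t3).

End GL3.

(* K = GL_3(O): invertible matrices over F whose entries and whose inverse's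
   entries lie in O = k[[eps]]. *)
Definition inK (k : fieldType) (g : 'M[LaurentSeries k]_3) : Prop :=
  g \in unitmx /\ (forall i j, in_image (g i j)) /\
  (forall i j, in_image (invmx g i j)).

Definition lcosetK (k : fieldType) (g : 'M[LaurentSeries k]_3) :
  'M[LaurentSeries k]_3 -> Prop :=
  fun x => exists h, inK h /\ x = g *m h.

(* Main.v *)
Require Import Defs.
From HB Require Import structures.
From mathcomp Require Import all_boot all_order all_algebra.
From mathcomp Require Import boolp ring.
Set Implicit Arguments. Unset Strict Implicit. Unset Printing Implicit Defensive.
Import GRing.Theory.
Local Open Scope ring_scope.

Section M.
Variable F : fieldType.
Definition mkU (a b c : F) : 'M[F]_3 := \matrix_(i, j)
  if i == j then 1 else
  if (i == 0 :> nat) && (j == 1 :> nat) then a else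
  if (i == 0 :> nat) && (j == 2 :> nat) then b else
  if (i == 1 :> nat) && (j == 2 :> nat) then c else 0.
Definition mkD (a b c : F) : 'M[F]_3 := \matrix_(i, j)
  if i == j then (if i == 0 :> nat then a else if i == 1 :> nat then b else c) else 0.

Ltac mx3 := apply/matrixP; case=> [[|[|[|?]]] ?] //; case=> [[|[|[|?]]] ?] //;
  rewrite ?(mxE, big_ord_recr, big_ord0) /= -?val_eqE /= ?inordK //=;
  rewrite ?(mulr0, mul0r, mulr1, mul1r, addr0, add0r, mulrN, mulNr, opprK, oppr0) //.

Lemma mkU_eq a b c a' b' c' : a = a' -> b = b' -> c = c' -> mkU a b c = mkU a' b' c'.
Proof. by move=> -> -> ->. Qed.
Lemma mkU_mul a b c a' b' c' : mkU a b c *m mkU a' b' c' = mkU (a + a') (b + a * c' + b') (c + c').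
Proof. mx3; ring. Qed.

Lemma mkU0 : mkU 0 0 0 = 1%:M.
Proof. mx3. Qed.

Lemma xgen1 t : xgen 1 t = mkU t 0 0.
Proof. mx3. Qed.
Lemma xgen2 t : xgen 2 t = mkU 0 0 t.
Proof. mx3. Qed.
Lemma w0E : w0bar F = \matrix_(i,j) if (i + j == 2)%N then (if i == 1 :> nat then -1 else 1) else 0.
Proof. rewrite /w0bar /sbar; mx3. Qed.
Lemma gauss_y (A B C : F) : B != 0 -> A*C - B != 0 ->
 w0bar F *m (mkU (-A) (A*C-B) (-C))^T = (mkU (A/(A*C-B)) (1/(A*C-B)) (C/B))^T *m mkD (A*C-B) (B/(A*C-B)) (1/B) *m mkU (-C/(A*C-B)) (1/(A*C-B)) (-A/B).
Proof. move=> HB HD; rewrite w0E; mx3; field; try (apply/andP; split); try assumption. Qed.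

Lemma mkU_unitri a b c : upper_unitri (mkU a b c).
Proof. split; first by move=> [[|[|[|?]]] ?] [[|[|[|?]]] ?] //; rewrite mxE.
by move=> [[|[|[|?]]] ?] //; rewrite mxE ?eqxx. Qed.
Lemma mkL_unitri a b c : lower_unitri (mkU a b c)^T.
Proof. split; first by move=> [[|[|[|?]]] ?] [[|[|[|?]]] ?] //; rewrite !mxE.
by move=> [[|[|[|?]]] ?] //; rewrite !mxE ?eqxx. Qed.
Lemma mkD_inv a b c : a != 0 -> b != 0 -> c != 0 -> inv_diagonal (mkD a b c).
Proof.
move=> ha hb hc; split; first by move=> [[|[|[|?]]] ?] [[|[|[|?]]] ?] //; rewrite mxE.
have H : mkD a b c *m mkD a^-1 b^-1 c^-1 = 1%:M by mx3; rewrite mulfV.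
by case: (mulmx1_unit H).
Qed.
Lemma inv_uniq (M N : 'M[F]_3) : M *m N = 1%:M -> invmx M = N.
Proof.
move=> H; have [uM _] := mulmx1_unit H.
by rewrite -[invmx M]mulmx1 -H mulmxA mulVmx // mul1mx.
Qed.
Lemma invmxM' (M N : 'M[F]_3) : M \in unitmx -> N \in unitmx -> invmx (M *m N) = invmx N *m invmx M.
Proof.
move=> uM uN; apply: inv_uniq.
by rewrite mulmxA -(mulmxA M) mulmxV // mulmx1 mulmxV.
Qed.
Lemma mkU_inv a b c : mkU a b c *m mkU (-a) (a * c - b) (-c) = 1%:M.
Proof. rewrite mkU_mul -mkU0; apply: mkU_eq; ring. Qed.
Lemma xw121 t1 t2 t3 : xword 1 2 1 t1 t2 t3 = mkU (t1 + t3) (t3 * t2) t2.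
Proof. rewrite /xword !xgen1 !xgen2 !mkU_mul; apply: mkU_eq; ring. Qed.
Lemma xw212 t1 t2 t3 : xword 2 1 2 t1 t2 t3 = mkU t2 (t2 * t1) (t3 + t1).
Proof. rewrite /xword !xgen1 !xgen2 !mkU_mul; apply: mkU_eq; ring. Qed.
Lemma xw121_sol (A B C : F) : A != 0 -> B != 0 -> A*C-B != 0 ->
  xword 1 2 1 (-C/(A*C-B) - (1/(A*C-B))/(-A/B)) (-A/B) ((1/(A*C-B))/(-A/B))
  = mkU (-C/(A*C-B)) (1/(A*C-B)) (-A/B).
Proof. move=> hA hB hD; rewrite xw121; apply: mkU_eq; field;
  try (apply/andP; split); try assumption. all: rewrite ?oppr_eq0 ?hA ?hB ?hC ?hD; reflexivity. Qed.
Lemma xw212_sol (A B C : F) : C != 0 -> B != 0 -> A*C-B != 0 ->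
  xword 2 1 2 ((1/(A*C-B))/(-C/(A*C-B))) (-C/(A*C-B)) (-A/B - (1/(A*C-B))/(-C/(A*C-B)))
  = mkU (-C/(A*C-B)) (1/(A*C-B)) (-A/B).
Proof. move=> hC hB hD; rewrite xw212; apply: mkU_eq; field;
  try (apply/andP; split); try assumption. all: rewrite ?oppr_eq0 ?hA ?hB ?hC ?hD; reflexivity. Qed.
End M.
Section K.
Variable k : fieldType.
Local Notation LF := (LaurentSeries k).
Local Notation tf := (@FracField.tofrac (ps k)).
Lemma img0 : in_image (0 : LF). Proof. by exists 0; rewrite tofrac0. Qed.
Lemma img1 : in_image (1 : LF). Proof. by exists 1; rewrite tofrac1. Qed.
Lemma imgD (x y : LF) : in_image x -> in_image y -> in_image (x + y).
Proof. by move=> [a ->] [b ->]; exists (a + b); rewrite tofracD. Qed.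
Lemma imgM (x y : LF) : in_image x -> in_image y -> in_image (x * y).
Proof. by move=> [a ->] [b ->]; exists (a * b); rewrite tofracM. Qed.
Lemma imgN (x : LF) : in_image x -> in_image (- x).
Proof. by move=> [a ->]; exists (- a); rewrite tofracN. Qed.
Lemma img_mul (M N : 'M[LF]_3) : (forall i j, in_image (M i j)) -> (forall i j, in_image (N i j)) ->
  forall i j, in_image ((M *m N) i j).
Proof.
move=> hM hN i j; rewrite mxE; apply: (big_ind (fun x : LF => in_image x)).
- exact: img0.
- exact: imgD.
- by move=> l _; apply: imgM.
Qed.
Lemma inKM (M N : 'M[LF]_3) : inK M -> inK N -> inK (M *m N).
Proof.
move=> [uM [hM iM]] [uN [hN iN]]; split.
  rewrite unitmx_mul; apply/andP; split; [exact uM | exact uN].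
split; first by apply: img_mul; [exact: hM | exact: hN].
rewrite (invmxM' uM uN); apply: img_mul; [exact: iN | exact: iM].
Qed.
Lemma inKV (M : 'M[LF]_3) : inK M -> inK (invmx M).
Proof.
move=> [uM [hM iM]]; split; first by rewrite unitmx_inv; exact uM.
split; first exact iM.
rewrite invmxK; exact hM.
Qed.
Lemma coset_eq (u h : 'M[LF]_3) : inK h ->
  forall g, lcosetK u g <-> lcosetK (u *m h) g.
Proof.
move=> Kh g; have uh : h \in unitmx by case: Kh => uh _; exact uh.
split.
- move=> [m [Km ->]]; exists (invmx h *m m); split.
    apply: inKM; [apply: inKV; exact Kh | exact Km].
  rewrite mulmxA -(mulmxA u) (mulmxV uh) mulmx1; reflexivity.
- move=> [m [Km ->]]; exists (h *m m); split; first by apply: inKM; [exact Kh | exact Km].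
  rewrite mulmxA; reflexivity.
Qed.
Lemma hI (x y z : LF) : in_image x -> in_image y -> in_image z -> forall i j, in_image (mkU x y z i j).
Proof.
move=> hx hy hz [[|[|[|i]]] Hi] [[|[|[|j]]] Hj];
  try (exfalso; discriminate Hi); try (exfalso; discriminate Hj);
  rewrite mxE /=;
  first [exact: img0 | exact: img1 | exact hx | exact hy | exact hz].
Qed.
Lemma inK_mkU (a b c : LF) : in_image a -> in_image b -> in_image c -> inK (mkU a b c).
Proof.
move=> ha hb hc; have H := mkU_inv a b c.
have [uM _] := mulmx1_unit H.
split; first exact uM.
split; first exact: hI.
rewrite (inv_uniq H); apply: hI; [exact: imgN| |exact: imgN].
apply: imgD; [apply: imgM; [exact ha | exact hc] | apply: imgN; exact hb].
Qed.
Definition Eps : ps k := PS (fun n => (n == 1)%N%:R).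
Lemma Eps_neq0 : tf Eps != 0.
Proof. rewrite tofrac_eq0; apply/eqP => h; have := congr1 (fun x => coef x 1) h.
by move=> /= /eqP; rewrite oner_eq0. Qed.
Lemma Eps_neq1 : tf Eps != 1.
Proof. rewrite -tofrac1 tofrac_eq; apply/eqP => h; have := congr1 (fun x => coef x 0) h.
by move=> /= /eqP; rewrite eq_sym oner_eq0. Qed.
End K.
Unset Implicit Arguments.
Theorem mainTheorem1 (k : finFieldType) (i1 i2 i3 : nat) :
  (i1, i2, i3) = (1%N, 2%N, 1%N) \/ (i1, i2, i3) = (2%N, 1%N, 2%N) ->
  forall u : 'M[LaurentSeries k]_3, upper_unitri u ->
  exists (t1 t2 t3 : LaurentSeries k) (y : 'M[LaurentSeries k]_3),
    yBFZ i1 i2 i3 t1 t2 t3 y /\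
    (forall g : 'M[LaurentSeries k]_3, lcosetK u g <-> lcosetK (invmx y) g).
Proof.
move=> Hw u [Hl Hd].
pose o0 := @Ordinal 3 0 isT. pose o1 := @Ordinal 3 1 isT. pose o2 := @Ordinal 3 2 isT.
pose p := u o0 o1. pose q := u o0 o2. pose r := u o1 o2.
have uE : u = mkU p q r.
  apply/matrixP => i j; rewrite mxE.
  case: i => [[|[|[|i]]] Hi]; try (exfalso; discriminate Hi);
  case: j => [[|[|[|j]]] Hj]; try (exfalso; discriminate Hj); simpl;
  first [ apply: Hl; reflexivity
        | (rewrite (_ : Ordinal Hj = Ordinal Hi); [apply: Hd | apply: val_inj; reflexivity])
        | (congr (u _ _); apply: val_inj; reflexivity) ].
pose LF := LaurentSeries k.
have [al [Ial Aal]] : exists al : LF, in_image al /\ p + al != 0.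
  case: (eqVneq p 0) => [->|hp].
  - exists 1; split; [exact: img1 | rewrite add0r; exact: oner_neq0].
  - exists 0; split; [exact: img0 | rewrite addr0; exact hp].
have [ga [Iga Cga]] : exists ga : LF, in_image ga /\ r + ga != 0.
  case: (eqVneq r 0) => [->|hr].
  - exists 1; split; [exact: img1 | rewrite add0r; exact: oner_neq0].
  - exists 0; split; [exact: img0 | rewrite addr0; exact hr].
pose A := p + al. pose C := r + ga. pose q' := q + p * ga.
pose e : LF := FracField.tofrac (Eps k).
have Ie : in_image e by exists (Eps k); reflexivity.
have e0 : e != 0 := Eps_neq0 k.
have e1 : e != 1 := Eps_neq1 k.
have [be [Ibe [B0 BD]]] : exists be : LF, in_image be /\ q' + be != 0 /\ A * C - (q' + be) != 0.
  case: (eqVneq q' 0) => h0.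
  - case: (eqVneq (A * C - (q' + 1)) 0) => h1.
    + exists e; split; first exact Ie; split.
      * rewrite h0 add0r; exact e0.
      * have -> : A * C - (q' + e) = (A * C - (q' + 1)) + (1 - e) by ring.
        rewrite h1 add0r subr_eq0 eq_sym; exact e1.
    + exists 1; split; first exact: img1; split; [rewrite h0 add0r; exact: oner_neq0 | exact h1].
  - case: (eqVneq (A * C - q') 0) => h2.
    + case: (eqVneq (q' + 1) 0) => h3.
      * exists e; split; first exact Ie; split.
        -- have -> : q' + e = (q' + 1) + (e - 1) by ring.
           rewrite h3 add0r subr_eq0; exact e1.
        -- have -> : A * C - (q' + e) = (A * C - q') - e by ring.
           rewrite h2 sub0r oppr_eq0; exact e0.
      * exists 1; split; first exact: img1; split; first exact h3.
        have -> : A * C - (q' + 1) = (A * C - q') - 1 by ring.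
        rewrite h2 sub0r oppr_eq0; exact: oner_neq0.
    + exists 0; split; first exact: img0; rewrite addr0; split; [exact h0 | exact h2].
pose B := q' + be.
have uk : u *m mkU al be ga = mkU A B C.
  rewrite uE mkU_mul; apply: mkU_eq; rewrite /A /B /C /q'; ring.
pose y := mkU (-A) (A * C - B) (-C).
have yinv : invmx y = mkU A B C.
  apply: inv_uniq; rewrite mkU_mul -mkU0; apply: mkU_eq; ring.
have Kk : inK (mkU al be ga) := inK_mkU Ial Ibe Iga.
have cos : forall g, lcosetK u g <-> lcosetK (invmx y) g.
  move=> g; rewrite yinv -uk; exact: coset_eq Kk g.
have hB : B != 0 := B0.
have hD : A * C - B != 0 := BD.
have hA : A != 0 := Aal.
have hC : C != 0 := Cga.
have gy := gauss_y hB hD.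
have hv : lower_unitri (mkU (A/(A*C-B)) (1/(A*C-B)) (C/B))^T := mkL_unitri _ _ _.
have ht : inv_diagonal (mkD (A*C-B) (B/(A*C-B)) (1/B)).
  apply: mkD_inv; first exact hD.
  - apply: mulf_neq0; [exact hB | rewrite invr_eq0; exact hD].
  - rewrite div1r invr_eq0; exact hB.
clearbody A C B.
case: Hw => [[-> -> ->]|[-> -> ->]].
- exists (-C/(A*C-B) - (1/(A*C-B))/(-A/B)), (-A/B), ((1/(A*C-B))/(-A/B)), y.
  split; last exact cos.
  split; first exact: mkU_unitri.
  rewrite /eta_rel /gauss_plus.
  exists ((mkU (A/(A*C-B)) (1/(A*C-B)) (C/B))^T), (mkD (A*C-B) (B/(A*C-B)) (1/B)).
  split; first exact hv. split; first exact ht.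
  rewrite (xw121_sol hA hB hD).
  split; first exact: mkU_unitri.
  exact gy.
- exists ((1/(A*C-B))/(-C/(A*C-B))), (-C/(A*C-B)), (-A/B - (1/(A*C-B))/(-C/(A*C-B))), y.
  split; last exact cos.
  split; first exact: mkU_unitri.
  rewrite /eta_rel /gauss_plus.
  exists ((mkU (A/(A*C-B)) (1/(A*C-B)) (C/B))^T), (mkD (A*C-B) (B/(A*C-B)) (1/B)).
  split; first exact hv. split; first exact ht.
  rewrite (xw212_sol hC hB hD).
  split; first exact: mkU_unitri.
  exact gy.
Qed.
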